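(* Let $X=\{x_1,\overline{x_1},x_2,\overline{x_2},\dots\}$ and let $F(X)$ be the free involutive monoid on $X$. There is an isomorphism of categories \[E\colon \coprod_{m\ge0}\bigl(\mathcal{IF}(m)\times_{H_m}X^m\bigr)\to T(F(X))\] induced from the evaluation functors $\mathcal{IF}(m)\times X^m\to T(F(X))$ given on objects by $(f,y_1,\dots,y_m)\mapsto \mathsf H_{F(X)}(f)(y_1,\dots,y_m)$.
   Context: An involutive monoid is a monoid with an involutive anti-automorphism $m\mapsto\overline m$; $F(X)$ is the free such monoid in which the involution of $x_i$ is $\overline{x_i}$ (its elements are words in $X$). Let $C_2=\{1,t\}$. The category $\Delta H_+$: objects $[n]=\{0,\dots,n\}$ for $n\ge -1$ ($[-1]=\emptyset$); a morphism $f:[n]\to[m]$ is a map of sets with a total order on each fibre and a $C_2$-label on each element of $[n]$; the composite $g\circ f$ has fibre over $i$ equal to the concatenation, in the order of $g^{-1}(i)$, of the fibres $f^{-1}(j)$, each replaced by $f^{-1}(j)^t$ (order reversed, labels multiplied by $t$) when $j$ has label $t$ in $g$. The automorphism group of $[m-1]$ is the hyperoctahedral group $H_m=C_2^m\rtimes\Sigma_m$. For an involutive monoid $M$, $f:[p-1]\to[q-1]$ and $\mathbf m\in M^p$, $\mathsf H_M(f)(\mathbf m)=(b_0,\dots,b_{q-1})$ with $b_i$ the product in the order of $f^{-1}(i)$ of $m_x$ (label $1$) or $\overline{m_x}$ (label $t$), empty product $1$. The tuple category $T(M)$ has objects all finite (possibly empty) tuples in $M$ and, for each $f\in\mathrm{Hom}_{\Delta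 H_+}([p-1],[q-1])$ and $\mathbf m\in M^p$, a morphism $(f,\mathbf m):\mathbf m\to\mathsf H_M(f)(\mathbf m)$, with composition induced from $\Delta H_+$. $\mathcal{IF}(m)$ is the under-category $[m-1]\downarrow\Delta H_+$ (objects: morphisms $f$ out of $[m-1]$; morphisms $f\to g\circ f$ given by $g$), with right $H_m$-action $f\bullet h=f\circ h$. $X^m$ is regarded as a discrete category with left $H_m$-action $h\cdot\mathbf y=\mathsf H_{F(X)}(h)(\mathbf y)$ (applying the involution to the labelled coordinates and permuting). $\mathcal{IF}(m)\times_{H_m}X^m$ is the quotient of the product category by $(f\circ h,\mathbf y)\sim(f,h\cdot\mathbf y)$. The evaluation functor sends a morphism $g:f\to g\circ f$ at $\mathbf y$ to the morphism $(g,\mathsf H_{F(X)}(f)(\mathbf y))$ of $T(F(X))$. *)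

(* Defs.v *)
From mathcomp Require Import all_boot.
From Stdlib Require Import Relations.
Set Implicit Arguments. Unset Strict Implicit. Unset Printing Implicit Defensive.

(* A letter of X = {x_1, bar x_1, x_2, bar x_2, ...}:
   (i, false) is x_i, (i, true) is bar x_i. *)
Definition Letter := (nat * bool)%type.
(* Elements of F(X) are words in X; the product is concatenation, unit [::]. *)
Definition Word := seq Letter.
Definition bar_letter (a : Letter) : Letter := (a.1, ~~ a.2).
Definition winv (w : Word) : Word := rev (map bar_letter w).

(* A morphism f : [p-1] -> [q-1] is encoded by the q-list of its fibres:
   the i-th entry lists the elements of f^{-1}(i) in their total order,
   each paired with its C_2-label (false = 1, true = t). *)
Definition Hom := seq (seq (nat * bool)).
Definition valid_hom (f : Hom) (p : nat) : bool :=
  perm_eq (map fst (flatten f)) (iota 0 p).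
Definition hcod (f : Hom) : nat := size f.

Definition idH (n : nat) : Hom := map (fun i => [:: (i, false)]) (iota 0 n).

Definition fibre_t (s : seq (nat * bool)) : seq (nat * bool) :=
  rev (map (fun a => (a.1, ~~ a.2)) s).

Definition comp (g f : Hom) : Hom :=
  map (fun gi => flatten (map (fun jb =>
         if jb.2 then fibre_t (nth [::] f jb.1) else nth [::] f jb.1) gi)) g.

Definition is_auto (h : Hom) (m : nat) : bool :=
  valid_hom h m && (size h == m) && all (fun s => size s == 1) h.

Definition Hmap (f : Hom) (m : seq Word) : seq Word :=
  map (fun fib => flatten (map (fun xl =>
         if xl.2 then winv (nth [::] m xl.1) else nth [::] m xl.1) fib)) f.

Definition embed (y : seq Letter) : seq Word := map (fun a => [:: a]) y.

Definition act (h : Hom) (y : seq Letter) : seq Letter :=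
  map (fun w => head (0, false) w) (Hmap h (embed y)).

Definition TObj := seq Word.
(* morphism (f, m) : m -> Hmap f m, with f : [size m - 1] -> [q-1] *)
Definition TMor := (Hom * seq Word)%type.
Definition valid_tmor (t : TMor) : bool := valid_hom t.1 (size t.2).
Definition tdom (t : TMor) : TObj := t.2.
Definition tcod (t : TMor) : TObj := Hmap t.1 t.2.
Definition tid (w : TObj) : TMor := (idH (size w), w).
Definition tcomp (t2 t1 : TMor) : TMor := (comp t2.1 t1.1, t1.2).

(* object (f, y): f : [m-1] -> [q-1] an object of IF(m), y in X^m, m = size y *)
Definition SObj := (Hom * seq Letter)%type.
Definition valid_sobj (o : SObj) : bool := valid_hom o.1 (size o.2).
(* morphism (g, f, y) : (f, y) -> (g \o f, y), g : f -> g \o f in IF(m) *)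
Definition SMor := (Hom * Hom * seq Letter)%type.
Definition valid_smor (s : SMor) : bool :=
  valid_hom s.1.2 (size s.2) && valid_hom s.1.1 (hcod s.1.2).
Definition sdom (s : SMor) : SObj := (s.1.2, s.2).
Definition scod (s : SMor) : SObj := (comp s.1.1 s.1.2, s.2).
Definition sid (o : SObj) : SMor := (idH (hcod o.1), o.1, o.2).
Definition scomp (s2 s1 : SMor) : SMor := (comp s2.1.1 s1.1.1, s1.1.2, s1.2).

Definition obj_step (a b : SObj) : Prop :=
  exists f h y, valid_hom f (size y) /\ is_auto h (size y) /\
    a = (comp f h, y) /\ b = (f, act h y).
Definition obj_equiv : relation SObj := clos_refl_sym_trans SObj obj_step.

Definition mor_step (a b : SMor) : Prop :=
  exists g f h y, valid_hom f (size y) /\ valid_hom g (hcod f) /\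
    is_auto h (size y) /\ a = (g, comp f h, y) /\ b = (g, f, act h y).
Definition mor_equiv : relation SMor := clos_refl_sym_trans SMor mor_step.

Definition Eobj (o : SObj) : TObj := Hmap o.1 (embed o.2).
Definition Emor (s : SMor) : TMor := (s.1.1, Hmap s.1.2 (embed s.2)).

(* Main.v *)
Require Import Defs.
From mathcomp Require Import all_boot.
From Stdlib Require Import Relations.
Set Implicit Arguments. Unset Strict Implicit.

Lemma winv_cat a b : winv (a ++ b) = winv b ++ winv a.
Proof. by rewrite /winv map_cat rev_cat. Qed.

Lemma winvK w : winv (winv w) = w.
Proof.
rewrite /winv map_rev revK -map_comp map_id_in // => -[x b] _.
by rewrite /bar_letter /= negbK.
Qed.

Definition Fm (m : seq Word) (xl : nat * bool) : Word :=
  if xl.2 then winv (nth [::] m xl.1) else nth [::] m xl.1.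

Lemma Hmap_E f m : Hmap f m = map (fun fib => flatten (map (Fm m) fib)) f.
Proof. by []. Qed.

Lemma nth_map0 (A : Type) (P : seq A -> Word) (s : seq (seq A)) j :
  P [::] = [::] -> nth [::] (map P s) j = P (nth [::] s j).
Proof. move=> P0; elim: s j => [|a s IH] [|j] //=. Qed.

Lemma fibre_t_F m fb :
  flatten (map (Fm m) (fibre_t fb)) = winv (flatten (map (Fm m) fb)).
Proof.
elim: fb => [|x fb IH] //=.
rewrite /fibre_t /= rev_cons -cats1 map_cat flatten_cat -/(fibre_t fb) IH.
rewrite winv_cat /= cats0; congr (_ ++ _).
by rewrite /Fm /=; case: (x.2) => //=; rewrite winvK.
Qed.

Lemma Hmap_comp g f m : Hmap (Defs.comp g f) m = Hmap g (Hmap f m).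
Proof.
rewrite /Defs.comp !Hmap_E -map_comp; apply: eq_map => gi /=.
elim: gi => [|[j b] gi IH] //=.
rewrite map_cat flatten_cat IH; congr (_ ++ _).
have HN : nth [::] (Hmap f m) j = flatten (map (Fm m) (nth [::] f j)).
  by rewrite Hmap_E (@nth_map0 _ (fun fib => flatten (map (Fm m) fib))).
rewrite /Fm /= -/(Fm m) HN; case: b => //=; exact: fibre_t_F.
Qed.

Definition letter (y : seq Letter) (p : nat * bool) : Letter :=
  if p.2 then bar_letter (nth (0, false) y p.1) else nth (0, false) y p.1.

Lemma Hmap_embed f y : (forall p, p \in flatten f -> p.1 < size y) ->
  Hmap f (embed y) = map (map (letter y)) f.
Proof.
move=> H; rewrite Hmap_E; apply/eq_in_map => fib Hfib.
rewrite -(flatten_map1 (letter y)); congr flatten; apply/eq_in_map => p Hp.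
have Hl : p.1 < size y.
  apply: H; apply/flattenP; by exists fib.
rewrite /Fm /embed (nth_map (0, false)) // /letter; by case: (p.2).
Qed.

Lemma valid_lt f n : valid_hom f n -> forall p, p \in flatten f -> p.1 < n.
Proof.
move=> V p Hp; have : p.1 \in iota 0 n.
  by rewrite -(perm_mem V); apply: map_f.
by rewrite mem_iota.
Qed.

Lemma valid_size f n : valid_hom f n -> size (flatten f) = n.
Proof. move=> V; by rewrite -(size_map fst) (perm_size V) size_iota. Qed.

Fixpoint canon (off : nat) (ns : seq nat) : Hom :=
  match ns with
  | [::] => [::]
  | n :: ns' => [seq (k, false) | k <- iota off n] :: canon (off + n) ns'
  end.

Lemma canon_fst off ns : map fst (flatten (canon off ns)) = iota off (sumn ns).
Proof.
elim: ns off => [|n ns IH] off //=.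
by rewrite map_cat IH iotaD -map_comp map_id.
Qed.

Lemma canon_valid ns : valid_hom (canon 0 ns) (sumn ns).
Proof. by rewrite /valid_hom canon_fst. Qed.

Lemma size_canon off ns : size (canon off ns) = size ns.
Proof. by elim: ns off => [|n ns IH] off //=; rewrite IH. Qed.

Definition sing (p : nat * bool) : seq (nat * bool) := [:: p].

Lemma comp_canon pre f :
  Defs.comp (canon (size pre) (map size f)) (map sing (pre ++ flatten f)) = f.
Proof.
elim: f pre => [|a f IH] pre //=.
rewrite /Defs.comp /=; congr (_ :: _); last first.
  by rewrite -size_cat catA; apply: IH.
set S := pre ++ a ++ flatten f.
transitivity [seq nth (0, false) S k | k <- iota (size pre) (size a)]; last first.
  rewrite map_nth_iota; last by rewrite /S size_cat addKn size_cat leq_addr.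
  by rewrite /S drop_size_cat // take_size_cat.
rewrite -map_comp -(flatten_map1 (nth (0, false) S)); congr flatten; apply/eq_in_map => k.
rewrite mem_iota /= => /andP[_ Hk].
rewrite (nth_map (0, false)) // /S size_cat size_cat addnA; exact: leq_trans Hk (leq_addr _ _).
Qed.

Lemma map_letter_canon pre w :
  map (map (letter (pre ++ flatten w))) (canon (size pre) (map size w)) = w.
Proof.
elim: w pre => [|a w IH] pre //=.
congr (_ :: _); last by rewrite -size_cat catA IH.
set S := pre ++ a ++ flatten w.
rewrite -map_comp /=.
transitivity [seq nth (0, false) S k | k <- iota (size pre) (size a)]; last first.
  rewrite map_nth_iota; last by rewrite /S size_cat addKn size_cat leq_addr.
  by rewrite /S drop_size_cat // take_size_cat.
by apply: eq_map => k.
Qed.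

Lemma sizes_Hmap f y : valid_hom f (size y) ->
  map size (Hmap f (embed y)) = map size f.
Proof.
move=> V; rewrite (Hmap_embed (valid_lt V)) -map_comp; apply: eq_map => s /=.
by rewrite size_map.
Qed.

Lemma flat_Hmap f y : valid_hom f (size y) ->
  flatten (Hmap f (embed y)) = map (letter y) (flatten f).
Proof. move=> V; by rewrite (Hmap_embed (valid_lt V)) map_flatten. Qed.

Lemma act_embed h y : is_auto h (size y) -> embed (act h y) = Hmap h (embed y).
Proof.
case/andP=> /andP[V _] /allP A.
rewrite /act (Hmap_embed (valid_lt V)) /embed -!map_comp; apply/eq_in_map => fib Hf /=.
by move: (A _ Hf); case: fib {Hf} => [|p [|]].
Qed.

Lemma Eobj_step a b : obj_step a b -> Eobj a = Eobj b.
Proof.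
move=> [f [h [y [_ [Ah [-> ->]]]]]].
by rewrite /Eobj /= Hmap_comp act_embed.
Qed.

Definition cobj (o : SObj) : SObj :=
  (canon 0 (map size o.1), map (letter o.2) (flatten o.1)).

Lemma canon_step o : valid_sobj o -> obj_step o (cobj o).
Proof.
case: o => f y V; rewrite /valid_sobj /= in V.
have Hs : size (flatten f) = size y by apply: valid_size.
exists (canon 0 (map size f)), (map sing (flatten f)), y.
have Hfl : flatten (map sing (flatten f)) = flatten f by apply: flatten_seq1.
split.
  by rewrite -Hs size_flatten; apply: canon_valid.
split.
  rewrite /is_auto /valid_hom Hfl; move: (V); rewrite /valid_hom => ->.
  rewrite size_map Hs eqxx /=.
  by apply/allP => s /mapP[p _ ->].
split.
  by have /= -> := comp_canon [::] f.
rewrite /cobj /act /=.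
rewrite (@Hmap_embed _ y); last by rewrite Hfl; apply: valid_lt.
by rewrite -!map_comp.
Qed.

Lemma Eobj_cobj o1 o2 : valid_sobj o1 -> valid_sobj o2 ->
  Eobj o1 = Eobj o2 -> cobj o1 = cobj o2.
Proof.
case: o1 => f1 y1; case: o2 => f2 y2; rewrite /valid_sobj /Eobj /cobj /= => V1 V2 E.
by rewrite -(sizes_Hmap V1) -(sizes_Hmap V2) -(flat_Hmap V1) -(flat_Hmap V2) E.
Qed.

Lemma obj_equiv_E o1 o2 : obj_equiv o1 o2 -> Eobj o1 = Eobj o2.
Proof.
elim => [a b /Eobj_step|a|a b _ ->|a b c _ -> _ ->] //.
Qed.

Lemma Eobj_equiv o1 o2 : valid_sobj o1 -> valid_sobj o2 ->
  Eobj o1 = Eobj o2 -> obj_equiv o1 o2.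
Proof.
move=> V1 V2 E.
apply: (rst_trans _ _ _ (cobj o1)); first by apply: rst_step; apply: canon_step.
rewrite (Eobj_cobj V1 V2 E); apply: rst_sym; apply: rst_step; exact: canon_step.
Qed.

Lemma Eobj_surj w : valid_sobj (canon 0 (map size w), flatten w) /\
  Eobj (canon 0 (map size w), flatten w) = w.
Proof.
have V : valid_sobj (canon 0 (map size w), flatten w).
  by rewrite /valid_sobj /= size_flatten; apply: canon_valid.
split => //; rewrite /Eobj /= (Hmap_embed (valid_lt V)).
by rewrite -[flatten w]cat0s map_letter_canon.
Qed.

Lemma Emor_step a b : mor_step a b -> Emor a = Emor b.
Proof.
move=> [g [f [h [y [_ [_ [Ah [-> ->]]]]]]]].
by rewrite /Emor /= Hmap_comp act_embed.
Qed.

Lemma mor_equiv_E s1 s2 : mor_equiv s1 s2 -> Emor s1 = Emor s2.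
Proof.
elim => [a b /Emor_step|a|a b _ ->|a b c _ -> _ ->] //.
Qed.

Lemma canon_mstep s : valid_smor s ->
  mor_step s (s.1.1, (cobj (s.1.2, s.2)).1, (cobj (s.1.2, s.2)).2).
Proof.
case: s => [[g f] y]; case/andP => /= V Vg.
have := @canon_step (f, y) V; move=> [f' [h [y' [Vf' [Ah [E1 E2]]]]]].
case: E1 => Ef Ey; subst y'.
exists g, f', h, y; split => //; split.
  by move: Vg; rewrite Ef /hcod /Defs.comp size_map.
rewrite /cobj /= in E2; case: E2 => E3 E4.
by split => //; split; [rewrite -Ef | rewrite E3 E4].
Qed.

Lemma Emor_equiv s1 s2 : valid_smor s1 -> valid_smor s2 ->
  Emor s1 = Emor s2 -> mor_equiv s1 s2.
Proof.
case: s1 => [[g1 f1] y1]; case: s2 => [[g2 f2] y2] V1 V2.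
rewrite /Emor /= => -[Eg E]; subst g2.
have E' : Eobj (f1, y1) = Eobj (f2, y2) by [].
case/andP: (V1) => W1 _; case/andP: (V2) => W2 _.
have C := @Eobj_cobj (f1, y1) (f2, y2) W1 W2 E'.
apply: (rst_trans _ _ _ (g1, (cobj (f1, y1)).1, (cobj (f1, y1)).2)).
  apply: rst_step; exact: (canon_mstep V1).
rewrite C; apply: rst_sym; apply: rst_step; exact: (canon_mstep V2).
Qed.

Theorem lemma3p7 :
  (* E is a functor (from each IF(m) x X^m) *)
  (forall s : SMor, valid_smor s ->
     valid_tmor (Emor s) /\ tdom (Emor s) = Eobj (sdom s) /\
     tcod (Emor s) = Eobj (scod s)) /\
  (forall o : SObj, valid_sobj o -> Emor (sid o) = tid (Eobj o)) /\
  (forall s1 s2 : SMor, valid_smor s1 -> valid_smor s2 -> scod s1 = sdom s2 ->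
     Emor (scomp s2 s1) = tcomp (Emor s2) (Emor s1)) /\
  (* the induced functor on the quotient is well defined and bijective on objects *)
  (forall o1 o2 : SObj, valid_sobj o1 -> valid_sobj o2 ->
     (Eobj o1 = Eobj o2 <-> obj_equiv o1 o2)) /\
  (forall w : TObj, exists o : SObj, valid_sobj o /\ Eobj o = w) /\
  (* ... and bijective on morphisms *)
  (forall s1 s2 : SMor, valid_smor s1 -> valid_smor s2 ->
     (Emor s1 = Emor s2 <-> mor_equiv s1 s2)) /\
  (forall t : TMor, valid_tmor t -> exists s : SMor, valid_smor s /\ Emor s = t).
Proof.
split.
  case=> [[g f] y] /andP[/= V Vg]; split.
    by rewrite /valid_tmor /Emor /= size_map.
  by split => //; rewrite /tcod /Emor /Eobj /= Hmap_comp.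
split.
  by case=> f y V; rewrite /Emor /sid /tid /Eobj /= size_map.
split; first by [].
split.
  move=> o1 o2 V1 V2; split; [exact: Eobj_equiv | exact: obj_equiv_E].
split.
  move=> w; exists (canon 0 (map size w), flatten w); exact: Eobj_surj.
split.
  move=> s1 s2 V1 V2; split; [exact: Emor_equiv | exact: mor_equiv_E].
case=> g w; rewrite /valid_tmor /= => Vg.
have [V E] := Eobj_surj w.
exists (g, canon 0 (map size w), flatten w); split.
  rewrite /valid_smor /=; apply/andP; split; first exact: V.
  by rewrite /hcod size_canon size_map.
by rewrite /Emor /=; rewrite /Eobj /= in E; rewrite E.
Qed.
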